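(* Let $A$ be a unital algebra over $\mathbb{F}_2$, $(\Omega^1,{\rm d})$ a first order differential calculus on $A$, and $\theta\in\Omega^1$ any element. Let $\bar A$ be the set $A$ with product $a\,\bar\cdot\,b=ab+a+b$ and addition $a\,\bar+\,b=a+b+1$. Let $\bar\Omega^1$ be the set $\Omega^1$ with addition, bimodule structure and differential $\omega\,\bar+\,\eta=\theta+\omega+\eta$, $a\,\bar\cdot\,\omega=a\theta+(a+1)\omega$, $\omega\,\bar\cdot\,a=\theta a+\omega(a+1)$, $\bar{\rm d} a=\theta+{\rm d} a$. Then $(\bar\Omega^1,\bar{\rm d})$ is a first order differential calculus on $\bar A$. Moreover: (i) the maps $a\mapsto\bar a=1+a$ on $A$ and $\omega\mapsto\bar\omega=\theta+\omega$ on $\Omega^1$ make $\bar{\ }:A\to\bar A$ a diffeomorphism; (ii) $\theta$ is the zero element of $\bar\Omega^1$; (iii) ${\rm d} a=\theta a+a\theta$ for all $a\in A$ (i.e. $\theta$ makes $\Omega^1$ inner) if and only if $\bar{\rm d} a=a\,\bar\cdot\,0\ \bar+\ 0\,\bar\cdot\,a$ for all $a$ (i.e. the zero element $0$ of $\Omega^1$ makes $\bar\Omega^1$ inner).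
   Context: A first order differential calculus on a unital algebra $B$ over $\mathbb{F}_2$ is a $B$-bimodule $\Omega^1_B$ with a linear map ${\rm d}:B\to\Omega^1_B$ satisfying ${\rm d}(ab)=({\rm d} a)b+a{\rm d} b$ and such that $\Omega^1_B$ is spanned by elements $a{\rm d} b$. An algebra isomorphism $\phi:A\to B$ between algebras with calculi is a diffeomorphism if there is a linear map $\phi_*:\Omega^1_A\to\Omega^1_B$ with $\phi_*(a\omega)=\phi(a)\phi_*(\omega)$, $\phi_*(\omega a)=\phi_*(\omega)\phi(a)$ and $\phi_*\circ{\rm d}={\rm d}\circ\phi$. The calculus is inner by $\theta$ if ${\rm d} a=\theta a-a\theta$ for all $a$ (over $\mathbb{F}_2$, signs are irrelevant). $\bar A$ is a unital $\mathbb{F}_2$-algebra with zero $1$ and unit $0$. *)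

(* Defs.v *)
(* algebras and calculi are given by raw operations plus axioms,
   because A-bar is a *different* algebra structure on the same carrier. *)
From Stdlib Require Import List.

(* A unital algebra over F_2 = unital (possibly noncommutative) ring with 1+1 = 0. *)
Definition is_F2alg (T : Type) (z u : T) (add mul : T -> T -> T) : Prop :=
  (forall a b c, add a (add b c) = add (add a b) c) /\
  (forall a b, add a b = add b a) /\
  (forall a, add z a = a) /\
  (forall a, exists b, add a b = z) /\
  (forall a b c, mul a (mul b c) = mul (mul a b) c) /\
  (forall a, mul u a = a) /\
  (forall a, mul a u = a) /\
  (forall a b c, mul a (add b c) = add (mul a b) (mul a c)) /\
  (forall a b c, mul (add a b) c = add (mul a c) (mul b c)) /\
  add u u = z.

(* First order differential calculus (Omega, d) on the algebra (T, z, u, add, mul):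
   an A-bimodule (F_2-scalars act automatically), a linear Leibniz map d,
   and Omega spanned by elements a db. *)
Definition is_fodc (T : Type) (z u : T) (add mul : T -> T -> T)
  (Om : Type) (oz : Om) (oadd : Om -> Om -> Om)
  (l : T -> Om -> Om) (r : Om -> T -> Om) (d : T -> Om) : Prop :=
  (forall x y w, oadd x (oadd y w) = oadd (oadd x y) w) /\
  (forall x y, oadd x y = oadd y x) /\
  (forall x, oadd oz x = x) /\
  (forall x, exists y, oadd x y = oz) /\
  (forall a x y, l a (oadd x y) = oadd (l a x) (l a y)) /\
  (forall a b x, l (add a b) x = oadd (l a x) (l b x)) /\
  (forall a b x, l (mul a b) x = l a (l b x)) /\
  (forall x, l u x = x) /\
  (forall a x y, r (oadd x y) a = oadd (r x a) (r y a)) /\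
  (forall a b x, r x (add a b) = oadd (r x a) (r x b)) /\
  (forall a b x, r x (mul a b) = r (r x a) b) /\
  (forall x, r x u = x) /\
  (forall a b x, r (l a x) b = l a (r x b)) /\
  (forall a b, d (add a b) = oadd (d a) (d b)) /\
  (forall a b, d (mul a b) = oadd (r (d a) b) (l a (d b))) /\
  (forall x, exists s : list (T * T),
      x = fold_right (fun p acc => oadd (l (fst p) (d (snd p))) acc) oz s).

Definition is_diffeo
  (TA : Type) (uA : TA) (addA mulA : TA -> TA -> TA)
  (OA : Type) (oaddA : OA -> OA -> OA) (lA : TA -> OA -> OA) (rA : OA -> TA -> OA)
  (dA : TA -> OA)
  (TB : Type) (uB : TB) (addB mulB : TB -> TB -> TB)
  (OB : Type) (oaddB : OB -> OB -> OB) (lB : TB -> OB -> OB) (rB : OB -> TB -> OB)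
  (dB : TB -> OB)
  (phi : TA -> TB) (phis : OA -> OB) : Prop :=
  (exists psi : TB -> TA, (forall a, psi (phi a) = a) /\ (forall b, phi (psi b) = b)) /\
  (forall a b, phi (addA a b) = addB (phi a) (phi b)) /\
  (forall a b, phi (mulA a b) = mulB (phi a) (phi b)) /\
  phi uA = uB /\
  (forall x y, phis (oaddA x y) = oaddB (phis x) (phis y)) /\
  (forall a x, phis (lA a x) = lB (phi a) (phis x)) /\
  (forall a x, phis (rA x a) = rB (phis x) (phi a)) /\
  (forall a, phis (dA a) = dB (phi a)).

(* The calculus is inner by theta (over F_2 signs are irrelevant). *)
Definition is_inner (T : Type) (Om : Type) (oadd : Om -> Om -> Om)
  (l : T -> Om -> Om) (r : Om -> T -> Om) (d : T -> Om) (theta : Om) : Prop :=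
  forall a, d a = oadd (r theta a) (l a theta).

Definition bar_add (T : Type) (u : T) (add : T -> T -> T) (a b : T) : T :=
  add (add a b) u.
Definition bar_mul (T : Type) (add mul : T -> T -> T) (a b : T) : T :=
  add (add (mul a b) a) b.
Definition bar_oadd (Om : Type) (oadd : Om -> Om -> Om) (theta x y : Om) : Om :=
  oadd theta (oadd x y).
Definition bar_l (T Om : Type) (u : T) (add : T -> T -> T) (oadd : Om -> Om -> Om)
  (l : T -> Om -> Om) (theta : Om) (a : T) (x : Om) : Om :=
  oadd (l a theta) (l (add a u) x).
Definition bar_r (T Om : Type) (u : T) (add : T -> T -> T) (oadd : Om -> Om -> Om)
  (r : Om -> T -> Om) (theta : Om) (x : Om) (a : T) : Om :=
  oadd (r theta a) (r x (add a u)).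
Definition bar_d (T Om : Type) (oadd : Om -> Om -> Om) (d : T -> Om) (theta : Om)
  (a : T) : Om :=
  oadd theta (d a).

(* Main.v *)
Require Import Defs.
From Stdlib Require Import List.

Definition cgrp (G:Type)(e:G)(p:G->G->G) := (forall a b c, p a (p b c) = p (p a b) c) /\ (forall a b, p a b = p b a) /\ (forall a, p e a = a) /\ (forall a, p a a = e).

Lemma L1 G e p (H : cgrp G e p) x y : p x (p x y) = y.
Proof. destruct H as (A & C & Z & K). rewrite A, K, Z. reflexivity. Qed.
Lemma L2 G e p (H : cgrp G e p) x y : p (p y x) x = y.
Proof. destruct H as (A & C & Z & K). rewrite <- A, K, C, Z. reflexivity. Qed.
Lemma I1 G e p (H : cgrp G e p) u a b : p u (p a b) = p (p (p u a) (p u b)) u.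
Proof. destruct H as (A & C & Z & K).
rewrite (C _ u), !A, K, Z, (C a u). reflexivity. Qed.
Lemma I2 G e p (H : cgrp G e p) u a b c : p u c = p (p (p (p u a) (p b c)) (p u a)) (p u b).
Proof. pose proof H as H'. destruct H as (A & C & Z & K).
rewrite (C (p u a) (p b c)), (L2 _ _ _ H'), (C b c), (C u b), <- A, (L1 _ _ _ H'), C. reflexivity. Qed.
Lemma I5 G e p (H : cgrp G e p) t x y : p t (p x y) = p t (p (p t x) (p t y)).
Proof. pose proof H as H'. destruct H as (A & C & Z & K).
rewrite (A (p t x) t y), (C (p t x) t), (L1 _ _ _ H'). reflexivity. Qed.
Lemma I6 G e p (H : cgrp G e p) t m n : p t n = p (p t m) (p m n).
Proof. pose proof H as H'. destruct H as (A & C & Z & K).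
rewrite <- A, (L1 _ _ _ H'). reflexivity. Qed.
Lemma tr_alg T z u add mul T' z' u' add' mul' (f:T->T') (g:T'->T)
  (fg: forall y, f (g y) = y)
  (Hadd: forall a b, f (add a b) = add' (f a) (f b))
  (Hmul: forall a b, f (mul a b) = mul' (f a) (f b))
  (Hz: f z = z') (Hu: f u = u') :
  is_F2alg T z u add mul -> is_F2alg T' z' u' add' mul'.
Proof.
  assert (sf : forall y, exists x, y = f x) by (intro y; exists (g y); auto).
  intros (h1 & h2 & h3 & h4 & h5 & h6 & h7 & h8 & h9 & h10).
  subst z' u'.
  repeat split; intros;
  repeat match goal with y : T' |- _ => destruct (sf y) as [? ->]; clear y end;
  repeat (rewrite <- Hadd || rewrite <- Hmul); try (f_equal; solve [auto]).
  match goal with x : T |- _ => destruct (h4 x) as [b hb]; exists (f b); rewrite <- Hadd, hb; auto end.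
Qed.

Lemma tr_fodc T z u add mul Om oz oadd l r d
  T' z' u' add' mul' Om' oz' oadd' l' r' d' (f:T->T') (g:T'->T) (k : Om -> Om') (h : Om' -> Om)
  (fg: forall y, f (g y) = y) (kh : forall y, k (h y) = y)
  (Hadd: forall a b, f (add a b) = add' (f a) (f b))
  (Hmul: forall a b, f (mul a b) = mul' (f a) (f b))
  (Hz: f z = z') (Hu: f u = u')
  (Hoadd: forall x y, k (oadd x y) = oadd' (k x) (k y))
  (Hl: forall a x, k (l a x) = l' (f a) (k x))
  (Hr: forall a x, k (r x a) = r' (k x) (f a))
  (Hd: forall a, k (d a) = d' (f a))
  (Hoz : k oz = oz') :
  is_fodc T z u add mul Om oz oadd l r d -> is_fodc T' z' u' add' mul' Om' oz' oadd' l' r' d'.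
Proof.
  assert (sf : forall y, exists x, y = f x) by (intro y; exists (g y); auto).
  assert (sk : forall y, exists x, y = k x) by (intro y; exists (h y); auto).
  intros (h1 & h2 & h3 & h4 & h5 & h6 & h7 & h8 & h9 & h10 & h11 & h12 & h13 & h14 & h15 & h16).
  subst z' u' oz'.
  repeat split; intros;
  repeat match goal with y : T' |- _ => destruct (sf y) as [? ->]; clear y end;
  repeat match goal with y : Om' |- _ => destruct (sk y) as [? ->]; clear y end;
  repeat (rewrite <- Hadd || rewrite <- Hmul || rewrite <- Hoadd || rewrite <- Hl || rewrite <- Hr || rewrite <- Hd);
  try (f_equal; solve [auto]).
  - match goal with x : Om |- _ => destruct (h4 x) as [b hb]; exists (k b); rewrite <- Hoadd, hb; auto end.
  - match goal with x : Om |- _ => destruct (h16 x) as [s hs]; exists (map (fun p => (f (fst p), f (snd p))) s); rewrite hs; clear hs end.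
    induction s as [|p s IH]; simpl; auto.
    rewrite Hoadd, IH, Hl, Hd. reflexivity.
Qed.

Lemma I2' G e p (H : cgrp G e p) u a b c : p u c = p (p (p (p u b) (p a c)) (p u a)) (p u b).
Proof. pose proof H as H'. destruct H as (A & C & Z & K).
rewrite (C (p (p (p u b) (p a c)) (p u a)) (p u b)), (A (p u b) (p (p u b) (p a c)) (p u a)), (L1 _ _ _ H').
rewrite (C (p a c)), <- A, (L1 _ _ _ H'). reflexivity. Qed.

Lemma canc (G : Type) (e : G) (p : G -> G -> G) (A : forall a b c, p a (p b c) = p (p a b) c) (Z : forall a, p e a = a)
  (C : forall a b, p a b = p b a) (N : forall a, exists b, p a b = e) y : p y y = y -> y = e.
Proof. intro Hy. destruct (N y) as [w Hw].
rewrite <- Hw. rewrite <- Hy at 2. rewrite <- A, Hw, C, Z. reflexivity. Qed.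

Theorem proposition5p3
  (T : Type) (z u : T) (add mul : T -> T -> T)
  (Om : Type) (oz : Om) (oadd : Om -> Om -> Om)
  (l : T -> Om -> Om) (r : Om -> T -> Om) (d : T -> Om)
  (HA : is_F2alg T z u add mul)
  (HOm : is_fodc T z u add mul Om oz oadd l r d)
  (theta : Om) :
  let addb := bar_add T u add in
  let mulb := bar_mul T add mul in
  let oaddb := bar_oadd Om oadd theta in
  let lb := bar_l T Om u add oadd l theta in
  let rb := bar_r T Om u add oadd r theta in
  let db := bar_d T Om oadd d theta in
  (* A-bar is a unital F_2-algebra with zero 1 and unit 0 *)
  is_F2alg T u z addb mulb /\
  (* (Omega-bar, d-bar) is a first order differential calculus on A-bar, with zero theta *)
  is_fodc T u z addb mulb Om theta oaddb lb rb db /\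
  (* (i) a |-> 1 + a, omega |-> theta + omega is a diffeomorphism A -> A-bar *)
  is_diffeo T u add mul Om oadd l r d
            T z addb mulb Om oaddb lb rb db
            (fun a => add u a) (fun x => oadd theta x) /\
  (* (ii) theta is the zero element of Omega-bar *)
  (forall x, oaddb theta x = x) /\
  (* (iii) theta makes Omega inner iff 0 makes Omega-bar inner *)
  (is_inner T Om oadd l r d theta <-> is_inner T Om oaddb lb rb db oz).
Proof.
  cbv zeta.
  pose proof HA as HA'. pose proof HOm as HOm'.
  destruct HA as (h1 & h2 & h3 & h4 & h5 & h6 & h7 & h8 & h9 & h10).
  destruct HOm as (o1 & o2 & o3 & o4 & o5 & o6 & o7 & o8 & o9 & o10 & o11 & o12 & o13 & o14 & o15 & o16).
  assert (mz : forall a, mul a z = z).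
  { intro a. apply (canc T z add h1 h3 h2 h4). rewrite <- h8, h3. reflexivity. }
  assert (cT : cgrp T z add).
  { repeat split; auto. intro a. rewrite <- (h7 a), <- h8, h10. apply mz. }
  assert (lz : forall x, l z x = oz).
  { intro x. apply (canc Om oz oadd o1 o3 o2 o4). rewrite <- o6, h3. reflexivity. }
  assert (cO : cgrp Om oz oadd).
  { repeat split; auto. intro x. rewrite <- (o8 x), <- o6, h10. apply lz. }
  assert (roz : forall a, r oz a = oz).
  { intro a. apply (canc Om oz oadd o1 o3 o2 o4). rewrite <- o9, o3. reflexivity. }
  assert (loz : forall a, l a oz = oz).
  { intro a. apply (canc Om oz oadd o1 o3 o2 o4). rewrite <- o5, o3. reflexivity. }
  assert (du : d u = oz).
  { pose proof (o15 u u) as E. rewrite h6, o8, o12 in E. rewrite E. apply cO. }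
  set (f := fun a => add u a). set (k := fun x => oadd theta x).
  assert (ff : forall a, f (f a) = a) by (intro; apply (L1 _ _ _ cT)).
  assert (kk : forall a, k (k a) = a) by (intro; apply (L1 _ _ _ cO)).
  assert (Hadd : forall a b, f (add a b) = bar_add T u add (f a) (f b)).
  { intros. apply (I1 _ _ _ cT). }
  assert (Hmul : forall a b, f (mul a b) = bar_mul T add mul (f a) (f b)).
  { intros. unfold f, bar_mul. rewrite h9, h6, h8, h7. apply (I2' _ _ _ cT). }
  assert (Hz : f z = u) by (unfold f; rewrite h2; apply h3).
  assert (Hu : f u = z) by apply h10.
  assert (Hoadd : forall x y, k (oadd x y) = bar_oadd Om oadd theta (k x) (k y)).
  { intros. apply (I5 _ _ _ cO). }
  assert (Hl : forall a x, k (l a x) = bar_l T Om u add oadd l theta (f a) (k x)).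
  { intros. unfold k, f, bar_l. rewrite (h2 (add u a) u), (L1 _ _ _ cT), o6, o8, o5.
    apply (I6 _ _ _ cO). }
  assert (Hr : forall a x, k (r x a) = bar_r T Om u add oadd r theta (k x) (f a)).
  { intros. unfold k, f, bar_r. rewrite (h2 (add u a) u), (L1 _ _ _ cT), o10, o12, o9.
    apply (I6 _ _ _ cO). }
  assert (Hd : forall a, k (d a) = bar_d T Om oadd d theta (f a)).
  { intros. unfold k, f, bar_d. rewrite o14, du, o3. reflexivity. }
  assert (Hoz : k oz = theta) by (unfold k; rewrite o2; apply o3).
  split; [|split; [|split; [|split]]].
  - exact (tr_alg T z u add mul T u z _ _ f f ff Hadd Hmul Hz Hu HA').
  - exact (tr_fodc T z u add mul Om oz oadd l r d T u z _ _ Om theta _ _ _ _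
             f f k k ff kk Hadd Hmul Hz Hu Hoadd Hl Hr Hd Hoz HOm').
  - split; [exists f; split; exact ff|].
    repeat split; assumption.
  - intro x. apply (L1 _ _ _ cO).
  - unfold is_inner, bar_d, bar_oadd, bar_r, bar_l.
    split; intros Hi a; rewrite ?roz, ?loz, ?(o2 _ oz), ?o3.
    + rewrite Hi. reflexivity.
    + pose proof (f_equal k (Hi a)) as E. unfold k in E.
      rewrite !(L1 _ _ _ cO), ?roz, ?loz, ?(o2 _ oz), ?o3 in E.
      exact E.
Qed.
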